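(* Let $X=\ell_p$ for some $1\le p<\infty$, or $X=c_0$, considered as a Banach algebra under coordinatewise multiplication. Let $x_0\in X$, $m\in\mathbb N$, and $\lambda\in\mathbb C$ with $|\lambda|>1$. If $x_0^m$ is frequently hypercyclic for $\lambda B$, then so is $\sum_{\nu=m}^N\alpha_\nu x_0^\nu$ for any $N\ge m$ and any $\alpha_m,\ldots,\alpha_N\in\mathbb C$ with $\alpha_m\ne0$.
   Context: $\lambda B(x(1),x(2),x(3),\ldots)=(\lambda x(2),\lambda x(3),\ldots)$; powers are coordinatewise. A vector $x$ is frequently hypercyclic for $T$ if for every non-empty open $U\subset X$ the set $\{n\in\mathbb N_0:T^nx\in U\}$ has positive lower density, where the lower density of $A\subset\mathbb N_0$ is $\liminf_{N\to\infty}\frac{\mathrm{card}(A\cap[0,N])}{N+1}$. *)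

(* Defs.v *)
From Stdlib Require Import Reals ClassicalEpsilon.
From Coquelicot Require Import Coquelicot.
Open Scope R_scope.

(* Complex sequences, indexed from 0 (x 0 plays the role of x(1)). *)
Definition seqC := nat -> C.

Definition rpow (t p : R) : R :=
  if Req_EM_T t 0 then 0 else Rpower t p.

Inductive space := Lp (p : R) | C0.

Definition inX (X : space) (x : seqC) : Prop :=
  match X with
  | Lp p => ex_series (fun n => rpow (Cmod (x n)) p)
  | C0 => is_lim_seq (fun n => Cmod (x n)) 0
  end.

Definition normX (X : space) (x : seqC) : R :=
  match X with
  | Lp p => Rpower (Series (fun n => rpow (Cmod (x n)) p)) (/ p)
  | C0 => real (Sup_seq (fun n => Finite (Cmod (x n))))
  end.

Definition openX (X : space) (U : seqC -> Prop) : Prop :=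
  (forall x, U x -> inX X x) /\
  forall y, U y -> exists eps, 0 < eps /\
    forall z, inX X z -> normX X (fun n => Cminus (z n) (y n)) < eps -> U z.

Fixpoint count_upto (A : nat -> Prop) (N : nat) : R :=
  (match N with O => 0 | S N' => count_upto A N' end) +
  (if excluded_middle_informative (A N) then 1 else 0).

Definition lower_density (A : nat -> Prop) : Rbar :=
  LimInf_seq (fun N => count_upto A N / INR (S N)).

Definition freq_hypercyclic (X : space) (T : seqC -> seqC) (x : seqC) : Prop :=
  inX X x /\
  forall U, openX X U -> (exists u, U u) ->
    Rbar_lt 0 (lower_density (fun n => U (Nat.iter n T x))).

Definition lamB (lam : C) (x : seqC) : seqC := fun n => Cmult lam (x (S n)).

Definition cpow (x : seqC) (k : nat) : seqC := fun n => pow_n (x n) k.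

(* Main.v *)
Require Import Defs.
From Stdlib Require Import Reals Lra Lia FunctionalExtensionality ClassicalEpsilon.
From Coquelicot Require Import Coquelicot.
Open Scope R_scope.

Lemma rpow0 p : rpow 0 p = 0.
Proof. unfold rpow; destruct (Req_EM_T 0 0); lra. Qed.

Lemma rpow_pos t p : 0 < t -> rpow t p = Rpower t p.
Proof. intros; unfold rpow; destruct (Req_EM_T t 0); [lra|auto]. Qed.

Lemma rpow_ge0 t p : 0 <= rpow t p.
Proof. unfold rpow; destruct (Req_EM_T t 0); [lra|]. unfold Rpower; left; apply exp_pos. Qed.

Lemma rpow_gt0 t p : 0 < t -> 0 < rpow t p.
Proof. intros; rewrite rpow_pos; auto. unfold Rpower; apply exp_pos. Qed.

Lemma rpow_mono s t p : 0 < p -> 0 <= s <= t -> rpow s p <= rpow t p.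
Proof.
  intros Hp [H0 H1]. destruct (Req_dec s 0) as [->|Hs].
  - rewrite rpow0; apply rpow_ge0.
  - rewrite !rpow_pos by lra. apply Rle_Rpower_l; lra.
Qed.

Lemma rpow_lt_inv s t p : 0 < p -> 0 <= s -> 0 <= t -> rpow s p < rpow t p -> s < t.
Proof.
  intros Hp Hs Ht H. destruct (Rlt_or_le s t); auto.
  assert (rpow t p <= rpow s p) by (apply rpow_mono; lra). lra.
Qed.

Lemma rpow_mult a b p : 0 <= a -> 0 <= b -> rpow (a*b) p = rpow a p * rpow b p.
Proof.
  intros Ha Hb. destruct (Req_dec a 0) as [->|Ha'].
  { rewrite Rmult_0_l, !rpow0; ring. }
  destruct (Req_dec b 0) as [->|Hb'].
  { rewrite Rmult_0_r, !rpow0; ring. }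
  rewrite !rpow_pos by nra. rewrite Rpower_mult_distr; auto; lra.
Qed.

Lemma rpow_le_self t p : 1 <= p -> 0 <= t <= 1 -> rpow t p <= t.
Proof.
  intros Hp [H0 H1]. destruct (Req_dec t 0) as [->|Ht].
  { rewrite rpow0; lra. }
  rewrite rpow_pos by lra. unfold Rpower.
  assert (ln t <= 0). { rewrite <- ln_1. apply ln_le; lra. }
  rewrite <- (exp_ln t) at 2 by lra. destruct (Req_dec (p * ln t) (ln t)) as [E|E].
  rewrite E; lra. left; apply exp_increasing. nra.
Qed.

Lemma rpow_inv_lt S e p : 0 < p -> 0 < S -> 0 < e -> S < rpow e p -> Rpower S (/p) < e.
Proof.
  intros Hp HS He H. rewrite rpow_pos in H by lra.
  replace e with (Rpower (Rpower e p) (/p)) at 1.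
  2:{ rewrite Rpower_mult. replace (p * /p) with 1 by (field; lra). apply Rpower_1; lra. }
  apply Rlt_Rpower_l. apply Rinv_0_lt_compat; lra. split; lra.
Qed.

Lemma Rpower_inv_lt S e p : 0 < p -> 0 < S -> 0 < e -> Rpower S (/p) < Rpower e (/p) -> S < e.
Proof.
  intros Hp HS He H. destruct (Rlt_or_le S e); auto.
  assert (Rpower e (/p) <= Rpower S (/p)). { apply Rle_Rpower_l. left; apply Rinv_0_lt_compat; lra. lra. }
  lra.
Qed.

Lemma Series_zero : Series (fun _ => 0) = 0.
Proof.
  replace (fun _:nat => 0) with (fun n:nat => 0 * (fun _:nat => 0) n).
  rewrite Series_scal_l; ring. apply functional_extensionality; intros; ring.
Qed.

Lemma Series_ge0 a : (forall n, 0 <= a n) -> ex_series a -> 0 <= Series a.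
Proof.
  intros H E. rewrite <- Series_zero. apply Series_le; auto. intros; split; [lra|auto].
Qed.

Lemma Series_term a k : (forall n, 0 <= a n) -> ex_series a -> a k <= Series a.
Proof.
  revert a; induction k; intros a H E.
  - rewrite Series_incr_1 by auto.
    assert (0 <= Series (fun k => a (S k))). apply Series_ge0; auto. apply (proj1 (ex_series_incr_1 a)); auto.
    lra.
  - rewrite Series_incr_1 by auto.
    assert (a (S k) <= Series (fun k => a (S k))). apply (IHk (fun k => a (S k))); auto. apply (proj1 (ex_series_incr_1 a)); auto.
    specialize (H 0%nat). lra.
Qed.

Definition Valid (X : space) := (exists p, X = Lp p /\ 1 <= p) \/ X = C0.

Definition G (X : space) (z : seqC) : R :=
  match X with Lp p => Series (fun n => rpow (Cmod (z n)) p) | C0 => normX C0 z end.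
Definition KX (X : space) : R := match X with Lp p => rpow 2 p | C0 => 1 end.
Definition Phi (X : space) (c : R) : R := match X with Lp p => rpow c p | C0 => c end.

Lemma lim0_small (u : nat -> R) : is_lim_seq u 0 -> forall r, 0 < r -> exists n0, forall j, (n0 <= j)%nat -> u j < r.
Proof.
  intros H r Hr. apply is_lim_seq_spec in H. destruct (H (mkposreal r Hr)) as [n0 Hn].
  exists n0; intros j Hj. specialize (Hn j Hj). simpl in Hn. rewrite Rminus_0_r in Hn.
  apply Rabs_def2 in Hn. lra.
Qed.

Lemma bounded_tail (u : nat -> R) : forall n0 B, (forall j, (n0 <= j)%nat -> u j <= B) -> exists D, forall j, u j <= D.
Proof.
  induction n0; intros B H.
  - exists B; intros; apply H; lia.
  - apply (IHn0 (Rmax B (u n0))). intros j Hj. destruct (Nat.eq_dec j n0) as [->|Hne].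
    apply Rmax_r. eapply Rle_trans; [apply H; lia| apply Rmax_l].
Qed.

Lemma c0_sup (z : seqC) : (exists M, forall k, Cmod (z k) <= M) ->
  (forall k, Cmod (z k) <= normX C0 z) /\ (forall M, (forall k, Cmod (z k) <= M) -> normX C0 z <= M).
Proof.
  intros [M HM]. unfold normX. generalize (Sup_seq_correct (fun n => Finite (Cmod (z n)))).
  destruct (Sup_seq (fun n => Finite (Cmod (z n)))) as [l| |]; simpl; intros H.
  - split.
    + intros k. apply Rnot_lt_le; intros Hk.
      destruct (H (mkposreal (Cmod (z k) - l) ltac:(lra))) as [H1 _]. specialize (H1 k). simpl in H1. lra.
    + intros M' HM'. apply Rnot_lt_le; intros Hk.
      destruct (H (mkposreal (l - M') ltac:(lra))) as [_ [n Hn]]. simpl in Hn. specialize (HM' n). lra.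
  - exfalso. destruct (H M) as [n Hn]. simpl in Hn. specialize (HM n). lra.
  - exfalso. specialize (H 0 0%nat). simpl in H. generalize (Cmod_ge_0 (z 0%nat)); lra.
Qed.

Lemma inX_tail X x : Valid X -> inX X x -> forall r, 0 < r -> exists n0, forall j, (n0 <= j)%nat -> Cmod (x j) < r.
Proof.
  intros [[p [-> Hp]]| ->] Hx r Hr; simpl in Hx.
  - apply ex_series_lim_0 in Hx. destruct (lim0_small _ Hx (rpow r p) (rpow_gt0 r p Hr)) as [n0 Hn].
    exists n0; intros j Hj. apply (rpow_lt_inv _ _ p); try lra. apply Cmod_ge_0. auto.
  - apply (lim0_small _ Hx r Hr).
Qed.

Lemma inX_bounded X x : Valid X -> inX X x -> exists D, 1 <= D /\ forall k, Cmod (x k) <= D.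
Proof.
  intros HX Hx. destruct (inX_tail X x HX Hx 1 Rlt_0_1) as [n0 Hn].
  destruct (bounded_tail (fun k => Cmod (x k)) n0 1) as [D HD]. intros; left; auto.
  exists (Rmax 1 D); split. apply Rmax_l. intros k; eapply Rle_trans; [apply HD|apply Rmax_r].
Qed.

Lemma KX_pos X : Valid X -> 0 < KX X.
Proof. intros [[p [-> Hp]]| ->]; simpl. apply rpow_gt0; lra. lra. Qed.

Lemma Phi_ge0 X c : Valid X -> 0 <= c -> 0 <= Phi X c.
Proof. intros [[p [-> Hp]]| ->]; simpl; auto. intros; apply rpow_ge0. Qed.

Lemma Phi_le X c : Valid X -> 0 <= c <= 1 -> Phi X c <= c.
Proof. intros [[p [-> Hp]]| ->]; simpl; intros; try lra. apply rpow_le_self; auto. Qed.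

Lemma G_ge0 X z : Valid X -> inX X z -> 0 <= G X z.
Proof.
  intros [[p [-> Hp]]| ->] Hz; simpl in *.
  - apply Series_ge0; auto. intros; apply rpow_ge0.
  - destruct (inX_bounded C0 z (or_intror eq_refl) Hz) as [D [_ HD]].
    destruct (c0_sup z (ex_intro _ D HD)) as [H1 _]. eapply Rle_trans; [apply Cmod_ge_0|apply (H1 0%nat)].
Qed.

Lemma cmp X a b c : Valid X -> inX X b -> 0 <= c -> (forall k, Cmod (a k) <= c * Cmod (b k)) ->
  inX X a /\ G X a <= Phi X c * G X b.
Proof.
  intros HX Hb Hc H. destruct HX as [[p [-> Hp]]| ->]; simpl in *.
  - assert (Ht : forall k, rpow (Cmod (a k)) p <= rpow c p * rpow (Cmod (b k)) p).
    { intros k. rewrite <- rpow_mult; auto. apply rpow_mono. lra. split; auto. apply Cmod_ge_0. apply Cmod_ge_0. }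
    assert (E : ex_series (fun k => rpow c p * rpow (Cmod (b k)) p)).
    { apply (ex_series_scal_l (rpow c p) _ Hb). }
    split.
    + eapply (@ex_series_le R_AbsRing R_CompleteNormedModule); [|apply E]. intros k. rewrite Rabs_pos_eq by apply rpow_ge0. auto.
    + rewrite <- Series_scal_l. apply Series_le; auto. intros; split; auto. apply rpow_ge0.
  - destruct (inX_bounded C0 b (or_intror eq_refl) Hb) as [D [_ HD]].
    destruct (c0_sup b (ex_intro _ D HD)) as [H1 _].
    assert (Ha : forall k, Cmod (a k) <= c * normX C0 b).
    { intros k. eapply Rle_trans; [apply H|]. apply Rmult_le_compat_l; auto. }
    split.
    + apply (is_lim_seq_le_le (fun _ => 0) _ (fun n => c * Cmod (b n))).
      intros; split; auto; apply Cmod_ge_0. apply is_lim_seq_const.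
      replace (Finite 0) with (Rbar_mult c 0). apply is_lim_seq_scal_l; auto. simpl; f_equal; ring.
    + apply (proj2 (c0_sup a (ex_intro _ _ Ha))). auto.
Qed.

Lemma tri X a b : Valid X -> inX X a -> inX X b ->
  inX X (fun n => Cplus (a n) (b n)) /\ G X (fun n => Cplus (a n) (b n)) <= KX X * (G X a + G X b).
Proof.
  intros HX Ha Hb. destruct HX as [[p [-> Hp]]| ->]; simpl in *.
  - assert (Ht : forall k, rpow (Cmod (a k + b k)) p <= rpow 2 p * (rpow (Cmod (a k)) p + rpow (Cmod (b k)) p)).
    { intros k. pose proof (Cmod_triangle (a k) (b k)). pose proof (Cmod_ge_0 (a k)). pose proof (Cmod_ge_0 (b k)).
      eapply Rle_trans. apply (rpow_mono _ (2 * Rmax (Cmod (a k)) (Cmod (b k)))). lra.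
      split. apply Cmod_ge_0. apply Rmax_case_strong; intros; lra.
      rewrite rpow_mult by (try lra; apply Rmax_case; auto). apply Rmult_le_compat_l. apply rpow_ge0.
      pose proof (rpow_ge0 (Cmod (a k)) p). pose proof (rpow_ge0 (Cmod (b k)) p).
      apply Rmax_case; lra. }
    assert (E : ex_series (fun k => rpow 2 p * (rpow (Cmod (a k)) p + rpow (Cmod (b k)) p))).
    { apply (ex_series_scal_l (rpow 2 p) (fun k => (rpow (Cmod (a k)) p + rpow (Cmod (b k)) p))).
      apply (ex_series_plus (fun k => rpow (Cmod (a k)) p) (fun k => rpow (Cmod (b k)) p)); auto. }
    split.
    + eapply (@ex_series_le R_AbsRing R_CompleteNormedModule); [|apply E]. intros k. rewrite Rabs_pos_eq by apply rpow_ge0. auto.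
    + rewrite <- Series_plus by auto. rewrite <- Series_scal_l. apply Series_le; auto. intros; split; auto. apply rpow_ge0.
  - destruct (inX_bounded C0 a (or_intror eq_refl) Ha) as [D [_ HD]].
    destruct (c0_sup a (ex_intro _ D HD)) as [H1 _].
    destruct (inX_bounded C0 b (or_intror eq_refl) Hb) as [D' [_ HD']].
    destruct (c0_sup b (ex_intro _ D' HD')) as [H1' _].
    assert (Hs : forall k, Cmod (a k + b k) <= 1 * (normX C0 a + normX C0 b)).
    { intros k. eapply Rle_trans; [apply Cmod_triangle|]. specialize (H1 k); specialize (H1' k); lra. }
    split.
    + apply (is_lim_seq_le_le (fun _ => 0) _ (fun n => Cmod (a n) + Cmod (b n))).
      intros; split; [apply Cmod_ge_0|apply Cmod_triangle]. apply is_lim_seq_const.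
      replace 0 with (0 + 0) by ring. apply is_lim_seq_plus'; auto.
    + apply (proj2 (c0_sup _ (ex_intro _ _ Hs))). auto.
Qed.

Lemma inX_opp X b : Valid X -> inX X b -> inX X (fun n => Copp (b n)).
Proof.
  intros HX Hb. refine (proj1 (cmp X (fun n => Copp (b n)) b 1 HX Hb Rle_0_1 _)).
  intros k. rewrite Cmod_opp. lra.
Qed.

Lemma inX_minus X a b : Valid X -> inX X a -> inX X b -> inX X (fun n => Cminus (a n) (b n)).
Proof.
  intros HX Ha Hb. apply (proj1 (tri X a _ HX Ha (inX_opp X b HX Hb))).
Qed.

Lemma open_ball X U y : Valid X -> openX X U -> U y ->
  exists e, 0 < e /\ forall z, inX X z -> G X (fun n => Cminus (z n) (y n)) < e -> U z.
Proof.
  intros HX [HU Ho] Hy. destruct (Ho y Hy) as [eps [Heps H]].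
  pose proof (HU y Hy) as Hyx.
  destruct HX as [[p [-> Hp]]| ->].
  - exists (rpow eps p); split. apply rpow_gt0; auto.
    intros z Hz HG. simpl in HG.
    pose proof (inX_minus _ z y (or_introl (ex_intro _ p (conj eq_refl Hp))) Hz Hyx) as Hd. simpl in Hd.
    destruct (Req_dec (Series (fun n => rpow (Cmod (Cminus (z n) (y n))) p)) 0) as [E|E].
    + assert (z = y) as ->; auto. apply functional_extensionality; intros k.
      pose proof (Series_term _ k (fun n => rpow_ge0 _ _) Hd). rewrite E in H0.
      destruct (Req_dec (Cmod (Cminus (z k) (y k))) 0) as [E'|E'].
      * apply Cmod_eq_0 in E'. unfold Cminus in E'. rewrite <- (Cplus_0_r (y k)), <- E'. ring.
      * assert (0 < Cmod (Cminus (z k) (y k))).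
        { destruct (Rle_lt_or_eq_dec 0 _ (Cmod_ge_0 (Cminus (z k) (y k)))); auto. congruence. }
        pose proof (rpow_gt0 (Cmod (Cminus (z k) (y k))) p H1). lra.
    + apply H; auto. simpl. apply rpow_inv_lt; try lra; auto.
      pose proof (Series_ge0 _ (fun n => rpow_ge0 _ _) Hd). lra.
  - exists eps; split; auto.
Qed.

Lemma open_of X V : Valid X -> (forall y, V y -> inX X y) ->
  (forall y, V y -> exists e, 0 < e /\ forall z, inX X z -> G X (fun n => Cminus (z n) (y n)) < e -> V z) ->
  openX X V.
Proof.
  intros HX HV Ho. split; auto. intros y Hy. destruct (Ho y Hy) as [e [He H]].
  destruct HX as [[p [-> Hp]]| ->].
  - exists (Rpower e (/p)); split. unfold Rpower; apply exp_pos.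
    intros z Hz Hn. apply H; auto. simpl in *.
    pose proof (inX_minus _ z y (or_introl (ex_intro _ p (conj eq_refl Hp))) Hz (HV y Hy)) as Hd. simpl in Hd.
    pose proof (Series_ge0 _ (fun n => rpow_ge0 _ _) Hd).
    destruct (Req_dec (Series (fun n => rpow (Cmod (Cminus (z n) (y n))) p)) 0) as [E|E].
    + lra.
    + apply (Rpower_inv_lt _ _ p); try lra; auto.
  - exists e; split; auto.
Qed.

Lemma count_ge0 A N : 0 <= count_upto A N.
Proof.
  induction N; simpl; destruct (excluded_middle_informative _); lra.
Qed.

Lemma count_split A B C N : (forall n, A n -> B n \/ C n) -> count_upto A N <= count_upto B N + count_upto C N.
Proof.
  intros H. induction N; simpl;
  destruct (excluded_middle_informative (A _)) as [a|a];
  destruct (excluded_middle_informative (B _)) as [b|b];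
  destruct (excluded_middle_informative (C _)) as [c|c];
  try (destruct (H _ a); tauto); try lra.
Qed.

Lemma count_lt n0 N : count_upto (fun n => (n < n0)%nat) N = INR (Nat.min (S N) n0).
Proof.
  induction N; simpl count_upto.
  - destruct n0; destruct (excluded_middle_informative _) as [a|a]; simpl; try lia; lra.
  - rewrite IHN. destruct (excluded_middle_informative _) as [a|a].
    + replace (Nat.min (S (S N)) n0) with (S (Nat.min (S N) n0)) by lia. rewrite S_INR; lra.
    + replace (Nat.min (S (S N)) n0) with (Nat.min (S N) n0) by lia. lra.
Qed.

Lemma density_transfer (A B : nat -> Prop) n0 : (forall n, (n0 <= n)%nat -> B n -> A n) ->
  Rbar_lt 0 (lower_density B) -> Rbar_lt 0 (lower_density A).
Proof.
  intros HAB HB. unfold lower_density in *.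
  set (b := fun N => count_upto B N / INR (S N)) in *.
  assert (Hc : exists c, 0 < c /\ exists N1, forall N, (N1 <= N)%nat -> c <= b N).
  { destruct (ex_LimInf_seq b) as [l Hl]. rewrite (is_LimInf_seq_unique _ _ Hl) in HB.
    destruct l as [l| |]; simpl in HB, Hl.
    - exists (l/2); split. lra. destruct (Hl (mkposreal (l/2) ltac:(lra))) as [_ [N1 HN]].
      exists N1; intros N HN'. specialize (HN N HN'). simpl in HN. lra.
    - exists 1; split. lra. destruct (Hl 1) as [N1 HN]. exists N1; intros N HN'. left; auto.
    - contradiction. }
  destruct Hc as [c [Hc [N1 HN1]]].
  destruct (nfloor_ex (INR n0 * 2 / c)) as [N2 HN2].
  { apply Rmult_le_pos. pose proof (pos_INR n0); lra. left; apply Rinv_0_lt_compat; lra. }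
  apply Rbar_lt_le_trans with (c/2). simpl; lra.
  rewrite <- (LimInf_seq_const (c/2)).
  apply LimInf_le. exists (max N1 N2). intros N HN.
  assert (HS : 0 < INR (S N)) by (apply lt_0_INR; lia).
  assert (Hcnt : count_upto B N <= INR n0 + count_upto A N).
  { eapply Rle_trans. apply (count_split B (fun n => (n < n0)%nat) A).
    intros n Hn. destruct (Nat.lt_ge_cases n n0); auto.
    rewrite count_lt. apply Rplus_le_compat_r. apply le_INR. lia. }
  specialize (HN1 N ltac:(lia)). unfold b in HN1.
  assert (INR (S N) >= INR n0 * 2 / c).
  { assert (INR (S N2) <= INR (S N)) by (apply le_INR; lia). rewrite S_INR in H. lra. }
  set (s := INR (S N)) in *.
  assert (Hb : c * s <= count_upto B N).
  { replace (count_upto B N) with ((count_upto B N / s) * s) by (field; lra). apply Rmult_le_compat_r; lra. }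
  assert (INR n0 <= c / 2 * s).
  { assert (INR n0 * 2 / c * c = INR n0 * 2) by (field; lra). nra. }
  apply Rmult_le_reg_r with s; auto.
  replace (count_upto A N / s * s) with (count_upto A N) by (field; lra). nra.
Qed.

Lemma iter_lamB lam (f : seqC) n k : Nat.iter n (lamB lam) f k = Cmult (pow_n lam n) (f (n + k)%nat).
Proof.
  revert k; induction n; intros k; simpl.
  - change (one : C) with (RtoC 1). ring.
  - unfold lamB at 1. rewrite IHn. replace (n + S k)%nat with (S (n + k)) by lia.
    change (mult lam (pow_n lam n)) with (Cmult lam (pow_n lam n)). ring.
Qed.

Lemma Cmod_pow (x : C) k : Cmod (pow_n x k) = Cmod x ^ k.
Proof.
  induction k; simpl.
  - apply Cmod_1.
  - change (mult x (pow_n x k)) with (Cmult x (pow_n x k)). rewrite Cmod_mult, IHk. ring.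
Qed.

Definition Pol (alpha : nat -> C) m N (x : C) : C := sum_n_m (fun nu => Cmult (alpha nu) (pow_n x nu)) m N.
Definition Tw (alpha : nat -> C) m N (r : R) : R := sum_n_m (fun nu => Cmod (alpha nu) * r ^ (nu - m)) (S m) N.

Lemma pol_bound alpha m d x r : 0 <= r -> Cmod x <= r ->
  Cmod (Cminus (Pol alpha m (m + d) x) (Cmult (alpha m) (pow_n x m))) <= Cmod (pow_n x m) * Tw alpha m (m + d) r.
Proof.
  intros Hr Hx. induction d.
  - unfold Pol, Tw. rewrite Nat.add_0_r, sum_n_n, sum_n_m_zero by lia.
    unfold Cminus. rewrite Cplus_opp_r, Cmod_0. change (zero : R) with 0. lra.
  - unfold Pol, Tw in *. replace (m + S d)%nat with (S (m + d)) by lia.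
    rewrite !sum_n_Sm by lia.
    set (P := sum_n_m (fun nu => Cmult (alpha nu) (pow_n x nu)) m (m + d)) in *.
    set (T := sum_n_m (fun nu => Cmod (alpha nu) * r ^ (nu - m)) (S m) (m + d)) in *.
    change (plus P (Cmult (alpha (S (m + d))) (pow_n x (S (m + d))))) with
      (Cplus P (Cmult (alpha (S (m + d))) (pow_n x (S (m + d))))).
    change (plus T (Cmod (alpha (S (m + d))) * r ^ (S (m + d) - m))) with
      (T + Cmod (alpha (S (m + d))) * r ^ (S (m + d) - m)).
    replace (Cminus (Cplus P (Cmult (alpha (S (m + d))) (pow_n x (S (m + d))))) (Cmult (alpha m) (pow_n x m)))
      with (Cplus (Cminus P (Cmult (alpha m) (pow_n x m))) (Cmult (alpha (S (m + d))) (pow_n x (S (m + d))))) by (unfold Cminus; ring).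
    eapply Rle_trans; [apply Cmod_triangle|].
    rewrite Cmod_mult, !Cmod_pow in *. rewrite Rmult_plus_distr_l.
    apply Rplus_le_compat; auto.
    replace (S (m + d) - m)%nat with (S d) by lia.
    replace (Cmod x ^ S (m + d)) with (Cmod x ^ m * Cmod x ^ S d) by (rewrite <- pow_add; f_equal; lia).
    pose proof (Cmod_ge_0 x). pose proof (Cmod_ge_0 (alpha (S (m + d)))).
    assert (0 <= Cmod x ^ m) by (apply pow_le; auto).
    assert (Cmod x ^ S d <= r ^ S d) by (apply pow_incr; auto).
    assert (0 <= Cmod x ^ S d) by (apply pow_le; auto).
    replace (Cmod (alpha (S (m + d))) * (Cmod x ^ m * Cmod x ^ S d)) with ((Cmod (alpha (S (m + d))) * Cmod x ^ m) * Cmod x ^ S d) by ring.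
    replace (Cmod x ^ m * (Cmod (alpha (S (m + d))) * r ^ S d)) with ((Cmod (alpha (S (m + d))) * Cmod x ^ m) * r ^ S d) by ring.
    apply Rmult_le_compat_l; auto. apply Rmult_le_pos; auto.
Qed.

Lemma Tw_small alpha m d r : 0 <= r <= 1 ->
  Tw alpha m (m + d) r <= r * sum_n_m (fun nu => Cmod (alpha nu)) (S m) (m + d).
Proof.
  intros Hr. unfold Tw. induction d.
  - rewrite Nat.add_0_r, !sum_n_m_zero by lia. change (zero : R) with 0. lra.
  - replace (m + S d)%nat with (S (m + d)) by lia. rewrite !sum_n_Sm by lia.
    change (plus ?a ?b) with (Rplus a b).
    replace (S (m + d) - m)%nat with (S d) by lia.
    assert (r ^ S d <= r). { simpl. pose proof (pow_le r d (proj1 Hr)). 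
      assert (r ^ d <= 1). { clear -Hr. induction d; simpl; nra. } nra. }
    pose proof (Cmod_ge_0 (alpha (S (m + d)))). nra.
Qed.

Lemma G_ext X f g : (forall n, f n = g n) -> G X f = G X g.
Proof. intros H. replace f with g; auto. symmetry; apply functional_extensionality; auto. Qed.
Lemma inX_ext X f g : (forall n, f n = g n) -> inX X g -> inX X f.
Proof. intros H. replace f with g; auto. symmetry; apply functional_extensionality; auto. Qed.

Lemma tri' X a b c : Valid X -> inX X a -> inX X b -> (forall n, c n = Cplus (a n) (b n)) ->
  inX X c /\ G X c <= KX X * (G X a + G X b).
Proof.
  intros HX Ha Hb H. destruct (tri X a b HX Ha Hb) as [H1 H2]. split.
  - apply (inX_ext X c _ H H1).
  - rewrite (G_ext X c (fun n => Cplus (a n) (b n)) H); auto.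
Qed.

Lemma key X U u a : Valid X -> openX X U -> U u -> a <> RtoC 0 ->
  exists V eta, openX X V /\ (exists y, V y) /\ 0 < eta /\
   forall w z, V w -> (forall k, Cmod (Cminus (z k) (Cmult a (w k))) <= eta * Cmod (w k)) -> U z.
Proof.
  intros HX HU Hu Ha.
  destruct (open_ball X U u HX HU Hu) as [e [He HB]].
  assert (Hux : inX X u) by (apply (proj1 HU); auto).
  pose proof (KX_pos X HX) as HK. set (K := KX X) in *.
  assert (Hma : 0 < Cmod a). { destruct (Rle_lt_or_eq_dec 0 _ (Cmod_ge_0 a)); auto. exfalso; apply Ha; apply Cmod_eq_0; auto. }
  assert (Hia : Cmod (/ a) = / Cmod a). { apply Cmod_inv; auto. }
  set (ia := Cmod (/ a)).
  assert (Hia0 : 0 < ia) by (unfold ia; rewrite Hia; apply Rinv_0_lt_compat; auto).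
  pose proof (Phi_ge0 X ia HX (Rlt_le _ _ Hia0)) as HPhi.
  pose proof (G_ge0 X u HX Hux) as HGu.
  set (M := K * Phi X ia * (1 + G X u)).
  assert (HM : 0 <= M) by (unfold M; apply Rmult_le_pos; [apply Rmult_le_pos; lra|lra]).
  set (delta := Rmin 1 (e / (4 * K))).
  assert (Hd0 : 0 < delta) by (unfold delta; apply Rmin_case; [lra| apply Rdiv_lt_0_compat; lra]).
  assert (Hd1 : delta <= 1) by apply Rmin_l.
  assert (Hd2 : delta <= e / (4 * K)) by apply Rmin_r.
  set (eta := Rmin 1 (e / (4 * K * (M + 1)))).
  assert (He0 : 0 < eta) by (unfold eta; apply Rmin_case; [lra| apply Rdiv_lt_0_compat; nra]).
  assert (He1 : eta <= 1) by apply Rmin_l.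
  assert (He2 : eta <= e / (4 * K * (M + 1))) by apply Rmin_r.
  set (V := fun w => inX X w /\ exists rho, 0 < rho /\ forall w2, inX X w2 ->
             G X (fun n => Cminus (w2 n) (w n)) < rho -> G X (fun n => Cminus (Cmult a (w2 n)) (u n)) < delta).
  exists V, eta. split; [|split; [|split; auto]].
  -
    apply open_of; auto. intros y [Hy _]; auto.
    intros y [Hy [rho [Hrho Hr]]]. exists (rho / (2 * K)); split. apply Rdiv_lt_0_compat; lra.
    intros z Hz HGz. split; auto. exists (rho / (2 * K)); split. apply Rdiv_lt_0_compat; lra.
    intros w2 Hw2 HG2. apply Hr; auto.
    destruct (tri' X (fun n => Cminus (w2 n) (z n)) (fun n => Cminus (z n) (y n)) (fun n => Cminus (w2 n) (y n)) HX
       (inX_minus X _ _ HX Hw2 Hz) (inX_minus X _ _ HX Hz Hy)) as [_ Ht].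
    { intros n; unfold Cminus; ring. }
    fold K in Ht. eapply Rle_lt_trans; [apply Ht|].
    replace rho with (K * (rho / (2 * K) + rho / (2 * K))) by (field; lra).
    apply Rmult_lt_compat_l; auto. lra.
  -
    exists (fun n => Cmult (/ a) (u n)).
    assert (Hua : inX X (fun n => Cmult (/ a) (u n))).
    { refine (proj1 (cmp X _ u ia HX Hux (Rlt_le _ _ Hia0) _)). intros k; rewrite Cmod_mult; unfold ia; lra. }
    split; auto.
    pose proof (Phi_ge0 X (Cmod a) HX (Cmod_ge_0 a)) as HPa.
    exists (delta / (Phi X (Cmod a) + 1)); split. apply Rdiv_lt_0_compat; lra.
    intros w2 Hw2 HG2.
    destruct (cmp X (fun n => Cminus (Cmult a (w2 n)) (u n)) (fun n => Cminus (w2 n) (Cmult (/ a) (u n))) (Cmod a) HX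
      (inX_minus X _ _ HX Hw2 Hua) (Cmod_ge_0 a)) as [_ Hc].
    { intros k. replace (Cminus (Cmult a (w2 k)) (u k)) with (Cmult a (Cminus (w2 k) (Cmult (/ a) (u k)))).
      rewrite Cmod_mult; lra. unfold Cminus. field. auto. }
    eapply Rle_lt_trans; [apply Hc|].
    pose proof (G_ge0 X _ HX (inX_minus X _ _ HX Hw2 Hua)).
    apply Rle_lt_trans with (Phi X (Cmod a) * (delta / (Phi X (Cmod a) + 1))).
    apply Rmult_le_compat_l; lra.
    apply Rlt_le_trans with ((Phi X (Cmod a) + 1) * (delta / (Phi X (Cmod a) + 1))).
    apply Rmult_lt_compat_r. apply Rdiv_lt_0_compat; lra. lra.
    right; field; lra.
  -
    intros w z [Hw [rho [Hrho Hr]]] Hz.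
    assert (Hd : G X (fun n => Cminus (Cmult a (w n)) (u n)) < delta).
    { apply Hr; auto. erewrite G_ext. 2:{ intros n. unfold Cminus. rewrite Cplus_opp_r. reflexivity. }
      destruct (cmp X (fun _ => RtoC 0) w 0 HX Hw (Rle_refl 0)) as [_ H0].
      { intros; rewrite Cmod_0; lra. }
      pose proof (Phi_le X 0 HX ltac:(lra)). pose proof (Phi_ge0 X 0 HX (Rle_refl 0)).
      pose proof (G_ge0 X w HX Hw). nra. }
    assert (Haw : inX X (fun n => Cminus (Cmult a (w n)) (u n))) by
      (apply inX_minus; auto; refine (proj1 (cmp X _ w (Cmod a) HX Hw (Cmod_ge_0 a) _)); intros; rewrite Cmod_mult; lra).
    pose proof (G_ge0 X _ HX Haw) as HGaw.
    assert (HGw : G X w <= M).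
    { destruct (cmp X (fun n => Cmult (/ a) (Cminus (Cmult a (w n)) (u n))) _ ia HX Haw (Rlt_le _ _ Hia0)) as [I1 G1].
      { intros; rewrite Cmod_mult; unfold ia; lra. }
      destruct (cmp X (fun n => Cmult (/ a) (u n)) _ ia HX Hux (Rlt_le _ _ Hia0)) as [I2 G2].
      { intros; rewrite Cmod_mult; unfold ia; lra. }
      destruct (tri' X _ _ w HX I1 I2) as [_ Ht].
      { intros n. unfold Cminus. field. auto. }
      fold K in Ht. eapply Rle_trans; [apply Ht|]. unfold M.
      rewrite Rmult_assoc. apply Rmult_le_compat_l; [lra|].
      nra. }
    assert (Hzx : inX X z /\ G X (fun n => Cminus (z n) (Cmult a (w n))) <= eta * M).
    { assert (Hzw : inX X (fun n => Cminus (z n) (Cmult a (w n))) /\ G X (fun n => Cminus (z n) (Cmult a (w n))) <= Phi X eta * G X w)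
        by (apply cmp; auto; lra).
      destruct Hzw as [Iz Gz]. split.
      - assert (Iaw : inX X (fun n => Cmult a (w n))) by
          (refine (proj1 (cmp X _ w (Cmod a) HX Hw (Cmod_ge_0 a) _)); intros; rewrite Cmod_mult; lra).
        apply (proj1 (tri' X _ _ z HX Iz Iaw ltac:(intros n; unfold Cminus; ring))).
      - pose proof (Phi_le X eta HX ltac:(lra)). pose proof (Phi_ge0 X eta HX ltac:(lra)).
        pose proof (G_ge0 X w HX Hw). eapply Rle_trans; [apply Gz|]. nra. }
    destruct Hzx as [Iz Gz].
    assert (Iaw : inX X (fun n => Cmult a (w n))) by
      (refine (proj1 (cmp X _ w (Cmod a) HX Hw (Cmod_ge_0 a) _)); intros; rewrite Cmod_mult; lra).
    apply HB; auto.
    destruct (tri' X (fun n => Cminus (Cmult a (w n)) (u n)) (fun n => Cminus (z n) (Cmult a (w n)))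
       (fun n => Cminus (z n) (u n)) HX Haw (inX_minus X _ _ HX Iz Iaw)) as [_ Ht].
    { intros n; unfold Cminus; ring. }
    fold K in Ht. eapply Rle_lt_trans; [apply Ht|].
    assert (eta * M <= e / (4 * K)).
    { apply Rle_trans with (e / (4 * K * (M + 1)) * M). apply Rmult_le_compat_r; auto.
      apply Rle_trans with (e / (4 * K * (M + 1)) * (M + 1)). apply Rmult_le_compat_l; [|lra].
      left; apply Rdiv_lt_0_compat; nra. right; field; lra. }
    apply Rle_lt_trans with (K * (e / (4 * K) + e / (4 * K))).
    apply Rmult_le_compat_l; lra.
    replace (K * (e / (4 * K) + e / (4 * K))) with (e / 2) by (field; lra). lra.
Qed.

Lemma Csplit (c y : C) : c = Cplus (Cminus c y) y.
Proof. unfold Cminus; ring. Qed.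

Lemma Cfact (L c y w : C) : Cminus (Cmult L c) (Cmult y (Cmult L w)) = Cmult L (Cminus c (Cmult y w)).
Proof. unfold Cminus; ring. Qed.

Theorem corollary2p3 (X : space)
  (HX : (exists p, X = Lp p /\ 1 <= p) \/ X = C0)
  (x0 : seqC) (Hx0 : inX X x0) (m : nat) (Hm : (1 <= m)%nat)
  (lam : C) (Hlam : 1 < Cmod lam) :
  freq_hypercyclic X (lamB lam) (cpow x0 m) ->
  forall (N : nat) (alpha : nat -> C), (m <= N)%nat -> alpha m <> RtoC 0 ->
    freq_hypercyclic X (lamB lam)
      (fun n => sum_n_m (fun nu => Cmult (alpha nu) (cpow x0 nu n)) m N).
Proof.
  intros [Hw0 Hwd] N alpha HmN Ha.
  assert (HV : Valid X) by exact HX.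
  replace N with (m + (N - m))%nat by lia. set (d := (N - m)%nat).
  set (v := fun n => sum_n_m (fun nu => Cmult (alpha nu) (cpow x0 nu n)) m (m + d)).
  assert (Hv : forall j, v j = Pol alpha m (m + d) (x0 j)) by reflexivity.
  assert (Hsplit : forall j, v j = Cplus (Cminus (v j) (Cmult (alpha m) (pow_n (x0 j) m))) (Cmult (alpha m) (pow_n (x0 j) m))).
  { intros j; apply Csplit. }
  split.
  - destruct (inX_bounded X x0 HV Hx0) as [D [HD1 HD]].
    refine (proj1 (cmp X v (cpow x0 m) (Cmod (alpha m) + Rabs (Tw alpha m (m + d) D)) HV Hw0 _ _)).
    { pose proof (Cmod_ge_0 (alpha m)); pose proof (Rabs_pos (Tw alpha m (m + d) D)); lra. }
    intros k. rewrite Hsplit. eapply Rle_trans; [apply Cmod_triangle|].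
    rewrite Hv. pose proof (pol_bound alpha m d (x0 k) D ltac:(lra) (HD k)).
    rewrite Cmod_mult. unfold cpow.
    pose proof (Cmod_ge_0 (pow_n (x0 k) m)). pose proof (Rle_abs (Tw alpha m (m + d) D)).
    assert (Cmod (pow_n (x0 k) m) * Tw alpha m (m + d) D <= Cmod (pow_n (x0 k) m) * Rabs (Tw alpha m (m + d) D))
      by (apply Rmult_le_compat_l; auto).
    nra.
  - intros U HU [u Hu].
    destruct (key X U u (alpha m) HV HU Hu Ha) as [V [eta [HVo [HVne [Heta HVk]]]]].
    pose proof (Hwd V HVo HVne) as Hdens.
    set (A := sum_n_m (fun nu => Cmod (alpha nu)) (S m) (m + d)).
    set (r := Rmin 1 (eta / (1 + Rabs A))).
    pose proof (Rabs_pos A).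
    assert (Hr0 : 0 < r) by (unfold r; apply Rmin_case; [lra| apply Rdiv_lt_0_compat; lra]).
    assert (Hr1 : r <= 1) by apply Rmin_l.
    assert (Hr2 : r <= eta / (1 + Rabs A)) by apply Rmin_r.
    assert (HrA : r * A <= eta).
    { apply Rle_trans with (r * Rabs A). apply Rmult_le_compat_l; [lra|apply Rle_abs].
      apply Rle_trans with (eta / (1 + Rabs A) * Rabs A). apply Rmult_le_compat_r; auto.
      apply Rle_trans with (eta / (1 + Rabs A) * (1 + Rabs A)).
      apply Rmult_le_compat_l; [left; apply Rdiv_lt_0_compat; lra| lra]. right; field; lra. }
    destruct (inX_tail X x0 HV Hx0 r Hr0) as [n0 Hn0].
    apply (density_transfer (fun n => U (Nat.iter n (lamB lam) v)) (fun n => V (Nat.iter n (lamB lam) (cpow x0 m))) n0); auto.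
    intros n Hn HVn. apply (HVk _ _ HVn). intros k.
    rewrite !iter_lamB.
    set (x := x0 (n + k)%nat).
    rewrite Cfact.
    rewrite Hv. fold x. unfold cpow; fold x.
    rewrite !Cmod_mult.
    pose proof (Hn0 (n + k)%nat ltac:(lia)) as Hx. fold x in Hx.
    pose proof (pol_bound alpha m d x r ltac:(lra) ltac:(lra)) as Hp.
    pose proof (Tw_small alpha m d r ltac:(lra)) as Ht. fold A in Ht.
    pose proof (Cmod_ge_0 (pow_n lam n)). pose proof (Cmod_ge_0 (pow_n x m)).
    assert (Cmod (pow_n x m) * Tw alpha m (m + d) r <= Cmod (pow_n x m) * eta) by (apply Rmult_le_compat_l; lra).
    assert (Cmod (Cminus (Pol alpha m (m + d) x) (Cmult (alpha m) (pow_n x m))) <= eta * Cmod (pow_n x m)) by lra.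
    replace (eta * (Cmod (pow_n lam n) * Cmod (pow_n x m))) with (Cmod (pow_n lam n) * (eta * Cmod (pow_n x m))) by ring.
    apply Rmult_le_compat_l; auto.
Qed.
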